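(* Let $A \in \mathbb{R}^{n\times n}$ be a full-rank real matrix all of whose eigenvalues have negative real part, let $P = P^\top \in \mathbb{R}^{n\times n}$, and set $U(\bm{x}) = \tfrac12 \bm{x}^\top P \bm{x}$. Then the decomposition $A\bm{x} = -\nabla U(\bm{x}) + f_U(\bm{x})$ holds for all $\bm{x}\in\mathbb{R}^n$ with $f_U(\bm{x}) = (A+P)\bm{x}$. Suppose further that $P$ is an optimal solution of the optimization problem \[ \text{maximize } \operatorname{tr}(P) \quad \text{subject to} \quad P = P^\top,\quad P(A+P) \preceq 0 . \] Then $PA + A^\top P + 2P^2 = 0$, and hence $\nabla U(\bm{x}) \cdot f_U(\bm{x}) = 0$ for all $\bm{x}\in\mathbb{R}^n$.
   Context: For a (not necessarily symmetric) square matrix $M$, the constraint $M \preceq 0$ means $\bm{x}^\top M \bm{x} \le 0$ for all $\bm{x}\in\mathbb{R}^n$, i.e. the symmetric part $\tfrac12(M+M^\top)$ is negative semidefinite; thus $P(A+P)\preceq 0$ is equivalent to $PA + A^\top P + 2P^2 \preceq 0$. $\operatorname{tr}$ denotes the trace. *)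

(* Defs.v *)
(* The real field R is modelled as the real subfield
   (Num.real) of an arbitrary numeric algebraically closed field C
   (e.g. C = complex numbers), so that complex eigenvalues make sense. *)
From HB Require Import structures.
From mathcomp Require Import all_boot all_order all_algebra.
Set Implicit Arguments. Unset Strict Implicit. Unset Printing Implicit Defensive.
Import Order.TTheory GRing.Theory Num.Theory.
Local Open Scope ring_scope.

(* M ⪯ 0 : x^T M x <= 0 for all real vectors x (M not necessarily symmetric) *)
Definition nsd (C : numClosedFieldType) (n : nat) (M : 'M[C]_n) : Prop :=
  forall x : 'cV[C]_n, x \is a realmx -> (x^T *m M *m x) 0 0 <= 0.

Definition hurwitz (C : numClosedFieldType) (n : nat) (A : 'M[C]_n) : Prop :=
  forall z : C, eigenvalue A z -> 'Re z < 0.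

Definition feasible (C : numClosedFieldType) (n : nat) (A P : 'M[C]_n) : Prop :=
  P \is a realmx /\ P^T = P /\ nsd (P *m (A + P)).

Definition optimal (C : numClosedFieldType) (n : nat) (A P : 'M[C]_n) : Prop :=
  feasible A P /\ forall Q : 'M[C]_n, feasible A Q -> \tr Q <= \tr P.

Definition U (C : numClosedFieldType) (n : nat) (P : 'M[C]_n) (x : 'cV[C]_n) : C :=
  2^-1 * (x^T *m P *m x) 0 0.

(* gradient of U for symmetric P: ∇U(x) = P x *)
Definition gradU (C : numClosedFieldType) (n : nat) (P : 'M[C]_n) (x : 'cV[C]_n)
  : 'cV[C]_n := P *m x.

Definition fU (C : numClosedFieldType) (n : nat) (A P : 'M[C]_n) (x : 'cV[C]_n)
  : 'cV[C]_n := (A + P) *m x.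

(* Main.v *)
Require Import Defs.
From HB Require Import structures.
From mathcomp Require Import all_boot all_order all_algebra.
From mathcomp Require Import ring.
Import Order.TTheory GRing.Theory Num.Theory Num.Def.
Local Open Scope ring_scope.

Section Dot.
Context {C : numClosedFieldType} {n : nat}.
Implicit Types (u v w : 'cV[C]_n).

Definition dot u v : C := (u^T *m v) 0 0.

Lemma realmx_tr m p (X : 'M[C]_(m, p)) : X \is a realmx -> X^T \is a realmx.
Proof. by move=> /mxOverP h; apply/mxOverP => i j; rewrite mxE. Qed.

Lemma dot_real u v : u \is a realmx -> v \is a realmx -> dot u v \is Num.real.
Proof.
move=> hu hv; rewrite /dot.
have : u^T *m v \is a realmx by rewrite mxOverM // realmx_tr.
by move/mxOverP; apply.
Qed.

Lemma dotC u v : dot u v = dot v u.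
Proof.
by rewrite /dot -[v^T *m u]trmxK trmx_mul trmxK [RHS]mxE.
Qed.

Lemma dotDl u v w : dot (u + v) w = dot u w + dot v w.
Proof. by rewrite /dot linearD /= mulmxDl mxE. Qed.

Lemma dotDr u v w : dot u (v + w) = dot u v + dot u w.
Proof. by rewrite /dot mulmxDr mxE. Qed.

Lemma dotZl (a : C) u v : dot (a *: u) v = a * dot u v.
Proof. by rewrite /dot linearZ /= -scalemxAl mxE. Qed.

Lemma dotZr (a : C) u v : dot u (a *: v) = a * dot u v.
Proof. by rewrite /dot -scalemxAr mxE. Qed.

Lemma dotNl u v : dot (- u) v = - dot u v.
Proof. by rewrite -scaleN1r dotZl mulN1r. Qed.

Lemma dotNr u v : dot u (- v) = - dot u v.
Proof. by rewrite -scaleN1r dotZr mulN1r. Qed.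

Lemma dotMr u (X : 'M[C]_n) v : dot u (X *m v) = dot (X^T *m u) v.
Proof. by rewrite /dot trmx_mul trmxK mulmxA. Qed.

Lemma dot_sum v : dot v v = \sum_i v i 0 * v i 0.
Proof. by rewrite /dot mxE; apply: eq_bigr => i _; rewrite mxE. Qed.

Lemma dot_ge0 v : v \is a realmx -> 0 <= dot v v.
Proof.
move=> /mxOverP hv; rewrite dot_sum; apply: sumr_ge0 => i _.
by rewrite -expr2 -realEsqr hv.
Qed.

Lemma dot_delta i v : dot (delta_mx i 0) v = v i 0.
Proof.
by rewrite /dot trmx_delta -rowE mxE.
Qed.

Lemma delta_real i : (delta_mx i 0 : 'cV[C]_n) \is a realmx.
Proof. by apply/mxOverP => j k; rewrite mxE; case: (_ && _); rewrite ?real0 ?real1. Qed.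

End Dot.
Lemma scalar_key (R : numFieldType) (f uu uv gu gg vv t e cH c4 : R) :
  f <= 0 -> 0 <= uu -> 0 <= t * t ->
  0 <= t * t * gg + 2%:R * t * gu + uu ->
  0 <= uu - 2%:R * t * uv + t * t * vv ->
  gg <= cH * vv -> vv <= c4 * (- f) -> 0 <= cH -> 0 <= c4 ->
  0 <= e -> 4%:R * e <= 1 -> e * (1 + t * t * c4 * (cH + 1)) <= 1 ->
  (1 - e) * f - e * uu - e * t * gu + e ^+ 2 * (uu + 2%:R * t * uv + t * t * vv) <= 0.
Proof.
move=> hf huu htt hs1 hs2 hs3 hs4 hcH hc4 he he4 heZ.
set T := t * t.
have -> : (1 - e) * f - e * uu - e * t * gu + e ^+ 2 * (uu + 2%:R * t * uv + T * vv)
  = - ((- f) * ((1 - e * (1 + T * c4 * (cH + 1))) + e * T * c4 * (cH / 2%:R + (1 - 2%:R * e)))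
     + (e / 2%:R) * (1 - 4%:R * e) * uu + (e / 2%:R) * (T * gg + 2%:R * t * gu + uu)
     + e ^+ 2 * (uu - 2%:R * t * uv + T * vv) + (e / 2%:R) * T * (cH * vv - gg)
     + T * (e * cH / 2%:R + 2%:R * e ^+ 2) * (c4 * (- f) - vv)).
  by rewrite /T; field.
rewrite oppr_le0.
have h2 : 0 < 2%:R :> R by rewrite ltr0n.
have he2 : 0 <= e / 2%:R by rewrite divr_ge0 // ltW.
have hsub : forall a b : R, a <= b -> 0 <= b - a by move=> a b; rewrite subr_ge0.
repeat apply: addr_ge0.
- apply: mulr_ge0; first by rewrite oppr_ge0.
  apply: addr_ge0; first exact: hsub.
  apply: mulr_ge0; first by apply: mulr_ge0 => //; apply: mulr_ge0.
  apply: addr_ge0; first by rewrite divr_ge0 // ltW.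
  apply: hsub; apply: le_trans he4; rewrite ler_wpM2r // ler_nat //.
- apply: mulr_ge0 => //; apply: mulr_ge0 => //; exact: hsub.
- exact: mulr_ge0.
- apply: mulr_ge0 => //; exact: exprn_ge0.
- by apply: mulr_ge0; [exact: mulr_ge0| exact: hsub].
- apply: mulr_ge0; last exact: hsub.
  apply: mulr_ge0 => //; apply: addr_ge0.
    by rewrite divr_ge0 ?mulr_ge0 // ltW.
  by apply: mulr_ge0 => //; exact: exprn_ge0.
Qed.

Section CS.
Context {C : numClosedFieldType} {n : nat} (M : 'M[C]_n).
Hypotheses (Mr : M \is a realmx) (Ms : M^T = M)
  (Mn : forall x : 'cV[C]_n, x \is a realmx -> dot x (M *m x) <= 0).

Lemma dot_symM u v : dot u (M *m v) = dot v (M *m u).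
Proof. by rewrite dotMr Ms dotC. Qed.

Lemma qexp y z r : dot (y + r *: z) (M *m (y + r *: z)) =
  dot y (M *m y) + 2%:R * r * dot y (M *m z) + r ^+ 2 * dot z (M *m z).
Proof.
rewrite mulmxDr -scalemxAr !dotDl !dotDr !dotZl !dotZr (dot_symM z y).
ring.
Qed.

Lemma CSM y z : y \is a realmx -> z \is a realmx ->
  dot y (M *m z) ^+ 2 <= dot y (M *m y) * dot z (M *m z).
Proof.
move=> yr zr.
set qy := dot y (M *m y); set qz := dot z (M *m z); set b := dot y (M *m z).
have Mxr : forall x, x \is a realmx -> M *m x \is a realmx by move=> x xr; apply: mxOverM.
have qyr : qy \is Num.real by rewrite dot_real ?Mxr.
have qzr : qz \is Num.real by rewrite dot_real ?Mxr.
have br : b \is Num.real by rewrite dot_real ?Mxr.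
have hq : forall r, r \is Num.real -> qy + 2%:R * r * b + r ^+ 2 * qz <= 0.
  move=> r rr; rewrite -qexp; apply: Mn; by rewrite realmxD // mxOverZ.
have qz0 : qz <= 0 by apply: Mn.
have qy0 : qy <= 0 by apply: Mn.
have [qzlt|qzeq] := boolP (qz < 0).
  have qzn : qz != 0 by rewrite lt_eqF.
  pose r := - b / qz.
  have rr : r \is Num.real by rewrite /r rpredM ?rpredN ?rpredV.
  have := hq r rr.
  have -> : qy + 2%:R * r * b + r ^+ 2 * qz = qy - b ^+ 2 / qz.
    by rewrite /r; field.
  rewrite -(ler_nM2r qzlt) mul0r.
  have -> : (qy - b ^+ 2 / qz) * qz = qy * qz - b ^+ 2 by field.
  by rewrite subr_ge0.
have qze : qz = 0.
  move: qzeq; rewrite real_ltNge ?real0 // negbK => h.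
  by apply/eqP; rewrite eq_le qz0 h.
have b0 : b = 0.
  apply/eqP/negP => bn.
  pose r := (1 - qy) / (2%:R * b).
  have rr : r \is Num.real by rewrite /r rpredM ?rpredV ?rpredM ?rpredB ?rpred1 ?realn.
  have := hq r rr.
  have -> : qy + 2%:R * r * b + r ^+ 2 * qz = 1.
    by rewrite qze /r; field; apply/negP.
  by move=> h; have := lt_le_trans ltr01 h; rewrite ltxx.
by rewrite b0 qze expr0n /= mulr0.
Qed.

Lemma kerM y : y \is a realmx -> dot y (M *m y) = 0 -> M *m y = 0.
Proof.
move=> yr hy; apply/matrixP => i j; rewrite ord1 [RHS]mxE.
have := CSM (delta_mx i 0) y (delta_real i) yr; rewrite hy mulr0 dot_delta => h.
have hr : (M *m y) i 0 \is Num.real.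
  by have /mxOverP := (mxOverM Mr yr : M *m y \is a realmx); apply.
have : (M *m y) i 0 ^+ 2 == 0 by rewrite eq_le h -realEsqr hr.
by rewrite sqrf_eq0 => /eqP.
Qed.

End CS.

Section Bounds.
Context {C : numClosedFieldType} {n : nat}.

Lemma CS_euclid (y z : 'cV[C]_n) : y \is a realmx -> z \is a realmx ->
  dot y z ^+ 2 <= dot y y * dot z z.
Proof.
move=> yr zr.
have mr : (- (1%:M) : 'M[C]_n) \is a realmx.
  by apply/mxOverP => i j; rewrite !mxE rpredN rpredMn ?rpred1.
have ms : (- (1%:M) : 'M[C]_n)^T = - 1%:M by rewrite linearN /= trmx1.
have mn : forall x : 'cV[C]_n, x \is a realmx -> dot x (- 1%:M *m x) <= 0.
  by move=> x xr; rewrite mulNmx mul1mx dotNr oppr_le0 dot_ge0.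
have := CSM (- 1%:M) mr ms mn y z yr zr.
by rewrite !mulNmx !mul1mx !dotNr sqrrN mulrNN.
Qed.

Lemma mx_bound (F : 'M[C]_n) : F \is a realmx ->
  exists c, [/\ c \is Num.real, 0 <= c &
    forall z : 'cV[C]_n, z \is a realmx -> dot (F *m z) (F *m z) <= c * dot z z].
Proof.
move=> Fr.
pose r i := F^T *m (delta_mx i 0 : 'cV[C]_n).
have rr : forall i, r i \is a realmx by move=> i; apply: mxOverM; rewrite ?realmx_tr ?delta_real.
exists (\sum_i dot (r i) (r i)); split.
- by apply: rpred_sum => i _; rewrite dot_real.
- by apply: sumr_ge0 => i _; rewrite dot_ge0.
move=> z zr; rewrite dot_sum mulr_suml; apply: ler_sum => i _.
have -> : (F *m z) i 0 = dot (r i) z by rewrite -dotMr dot_delta.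
by rewrite -expr2 CS_euclid.
Qed.

End Bounds.

Section L2.
Context {C : numClosedFieldType} {n : nat} (M : 'M[C]_n).
Hypotheses (Mr : M \is a realmx) (Ms : M^T = M)
  (Mn : forall x : 'cV[C]_n, x \is a realmx -> dot x (M *m x) <= 0).

Lemma L2 : exists c, [/\ c \is Num.real, 0 <= c &
  forall x : 'cV[C]_n, x \is a realmx -> dot (M *m x) (M *m x) <= c * (- dot x (M *m x))].
Proof.
have [c0 [c0r c0p hc0]] := mx_bound M Mr.
have Mxr : forall x : 'cV[C]_n, x \is a realmx -> M *m x \is a realmx by move=> x xr; apply: mxOverM.
have hq : forall z : 'cV[C]_n, z \is a realmx ->
    2%:R * (- dot z (M *m z)) <= (1 + c0) * dot z z.
  move=> z zr.
  have h0 := dot_ge0 (z + M *m z) (realmxD zr (Mxr z zr)).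
  rewrite dotDl !dotDr (dotC (M *m z) z) in h0.
  have h1 := hc0 z zr.
  rewrite -subr_ge0.
  have -> : (1 + c0) * dot z z - 2%:R * - dot z (M *m z) =
    (dot z z + dot z (M *m z) + (dot z (M *m z) + dot (M *m z) (M *m z)))
    + (c0 * dot z z - dot (M *m z) (M *m z)) by ring.
  by apply: addr_ge0 => //; rewrite subr_ge0.
exists (1 + c0); split.
- by rewrite rpredD ?rpred1.
- by rewrite addr_ge0 ?ler01.
move=> x xr.
set w := dot (M *m x) (M *m x).
have w0 : 0 <= w by rewrite dot_ge0 ?Mxr.
have qx0 : 0 <= - dot x (M *m x) by rewrite oppr_ge0 Mn.
have hcs := CSM M Mr Ms Mn x (M *m x) xr (Mxr x xr).
have hb : dot x (M *m (M *m x)) = w by rewrite dotMr Ms.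
rewrite hb in hcs.
have h2 : 2%:R * w ^+ 2 <= (- dot x (M *m x)) * ((1 + c0) * w).
  apply: le_trans (_ : (- dot x (M *m x)) * (2%:R * (- dot (M *m x) (M *m (M *m x)))) <= _).
    have -> : (- dot x (M *m x)) * (2%:R * (- dot (M *m x) (M *m (M *m x)))) = 2%:R * (dot x (M *m x) * dot (M *m x) (M *m (M *m x))) by ring.
    by rewrite ler_pM2l ?ltr0n.
  by rewrite ler_wpM2l // hq ?Mxr.
have [wz|wpos] := eqVneq w 0.
  by rewrite wz mulr_ge0 // addr_ge0 ?ler01.
have wp : 0 < w by rewrite lt_def wpos w0.
have h3 : 2%:R * w <= (1 + c0) * (- dot x (M *m x)).
  rewrite -(ler_pM2r wp) -mulrA -expr2 (mulrC (1 + c0)) -mulrA; exact: h2.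
apply: le_trans h3; rewrite ler_peMl // ler1n //.
Qed.

End L2.

Lemma conj_real {C : numClosedFieldType} m p (X : 'M[C]_(m, p)) :
  map_mx conjC X = X -> X \is a realmx.
Proof.
move=> h; apply/mxOverP => i j; apply/CrealP.
by have := congr1 (fun Y : 'M[C]_(m, p) => Y i j) h; rewrite mxE.
Qed.

Lemma conjK_mx {C : numClosedFieldType} m p (X : 'M[C]_(m, p)) :
  map_mx conjC (map_mx conjC X) = X.
Proof. by apply/matrixP => i j; rewrite !mxE conjCK. Qed.

Section Main.
Context {C : numClosedFieldType} {n : nat} (A P : 'M[C]_n).
Hypotheses (Ar : A \is a realmx) (Pr : P \is a realmx) (Ps : P^T = P).

Definition Mmx := P *m (A + P) + (P *m (A + P))^T.
Definition Bmx := A + 2%:R *: P.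

Lemma Mmx_real : Mmx \is a realmx.
Proof.
have h : P *m (A + P) \is a realmx by apply: mxOverM => //; rewrite realmxD.
by rewrite /Mmx realmxD // realmx_tr.
Qed.

Lemma Mmx_sym : Mmx^T = Mmx.
Proof. by rewrite /Mmx linearD /= trmxK addrC. Qed.

Lemma Mmx_E : Mmx = P *m A + A^T *m P + 2%:R *: (P *m P).
Proof.
rewrite /Mmx trmx_mul [(A + P)^T]linearD /= -[P^T]/(trmx P) Ps mulmxDr mulmxDl scaler_nat mulr2n.
by rewrite !addrA; congr (_ + _); rewrite addrAC.
Qed.

Lemma Mmx_q x : dot x (Mmx *m x) = 2%:R * dot x ((P *m (A + P)) *m x).
Proof.
rewrite /Mmx mulmxDl dotDr [in X in _ + X = _]dotMr trmxK dotC.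
by rewrite mulr2n mulrDl mul1r.
Qed.

Hypothesis hnsd : nsd (P *m (A + P)).

Lemma Mmx_nsd x : x \is a realmx -> dot x (Mmx *m x) <= 0.
Proof.
move=> xr; rewrite Mmx_q; have := hnsd x xr; rewrite /dot mulmxA => h.
apply: mulr_ge0_le0 => //; by rewrite !mulmxA.
Qed.

Lemma K1 (y : 'cV[C]_n) : y \is a realmx -> P *m y = 0 -> Mmx *m y = 0 /\ P *m (A *m y) = 0.
Proof.
move=> yr Py.
have q0 : dot y (Mmx *m y) = 0.
  by rewrite Mmx_q -mulmxA dotMr -[P^T]/(trmx P) Ps Py /dot trmx0 mul0mx mxE mulr0.
have My := kerM Mmx Mmx_real Mmx_sym Mmx_nsd y yr q0.
split => //.
move: My; rewrite Mmx_E !mulmxDl -!mulmxA Py !mulmx0 -scalemxAl -mulmxA Py mulmx0.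
by rewrite scaler0 !addr0.
Qed.

Lemma K2 (y : 'cV[C]_n) : y \is a realmx -> P *m y = 0 -> Mmx *m (Bmx *m y) = 0.
Proof.
move=> yr Py; have [_ PAy] := K1 y yr Py.
have Ayr : A *m y \is a realmx by apply: mxOverM.
have [MAy _] := K1 (A *m y) Ayr PAy.
by rewrite /Bmx [(A + _) *m y]mulmxDl -scalemxAl Py scaler0 addr0.
Qed.

Lemma K3 (c : 'cV[C]_n) : P *m c = 0 -> Mmx *m (Bmx *m c) = 0.
Proof.
move=> Pc.
pose c' := map_mx conjC c.
have Pc' : P *m c' = 0.
  by rewrite /c' -{1}(realmxC Pr) -map_mxM Pc map_mx0.
pose r1 := c + c'; pose r2 := 'i *: (c - c').
have r1r : r1 \is a realmx.
  by apply: conj_real; rewrite /r1 map_mxD conjK_mx addrC.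
have r2r : r2 \is a realmx.
  apply: conj_real; rewrite /r2 map_mxZ map_mxB conjK_mx /= conjCi.
  by rewrite scaleNr -scalerN opprB.
have Pr1 : P *m r1 = 0 by rewrite /r1 mulmxDr Pc Pc' addr0.
have Pr2 : P *m r2 = 0 by rewrite /r2 -scalemxAr mulmxBr Pc Pc' subr0 scaler0.
have h1 := K2 r1 r1r Pr1.
have h2 := K2 r2 r2r Pr2.
have ec : (2%:R : C) *: c = r1 - 'i *: r2.
  apply/matrixP => i j; rewrite /r1 /r2 !mxE.
  rewrite [_ * (_ * _)]mulrA mulCii.
  ring.
have : (2%:R : C) *: (Mmx *m (Bmx *m c)) = 0.
  by clearbody r1 r2; rewrite scalemxAr scalemxAr ec mulmxBr mulmxBr -!scalemxAr h1 h2 scaler0 subr0.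
by move/eqP; rewrite scaler_eq0 pnatr_eq0 /= => /eqP.
Qed.

Lemma K4 : (Mmx *m Bmx <= P)%MS.
Proof.
rewrite submxE; move: (mulmx_coker P); move: (cokermx P) => K PK.
apply/eqP/matrixP => i j.
have hc : P *m col j K = 0 by rewrite colE mulmxA PK mul0mx.
have := congr1 (fun X : 'cV[C]_n => X i 0) (K3 _ hc).
rewrite colE !mulmxA -colE [in X in X = _ -> _]mxE => ->.
by rewrite !mxE.
Qed.

Lemma Bmx_real : Bmx \is a realmx.
Proof. by rewrite /Bmx realmxD // mxOverZ // realn. Qed.

Lemma Hex : exists H : 'M[C]_n, H \is a realmx /\ Mmx *m Bmx = Mmx *m H *m P.
Proof.
pose H0 := Bmx *m pinvmx P.
have e0 : Mmx *m Bmx = Mmx *m H0 *m P by rewrite /H0 mulmxA mulmxKpV // K4.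
have MBr : Mmx *m Bmx \is a realmx by apply: mxOverM; rewrite ?Mmx_real ?Bmx_real.
have e1 : Mmx *m Bmx = Mmx *m map_mx conjC H0 *m P.
  have := congr1 (map_mx conjC) e0.
  by rewrite (realmxC MBr) !map_mxM (realmxC Mmx_real) (realmxC Pr).
exists ((2%:R : C)^-1 *: (H0 + map_mx conjC H0)); split.
  apply: conj_real; rewrite map_mxZ map_mxD conjK_mx /= fmorphV rmorph_nat.
  by rewrite addrC.
rewrite -scalemxAr -scalemxAl (mulmxDr Mmx H0 (map_mx conjC H0)) (mulmxDl (Mmx *m H0) (Mmx *m map_mx conjC H0) P) -e0 -e1.
by rewrite -mulr2n -scaler_nat scalerA mulVf ?pnatr_eq0 // scale1r.
Qed.

Lemma realmxN m p (X : 'M[C]_(m, p)) : X \is a realmx -> - X \is a realmx.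
Proof. by move=> /mxOverP h; apply/mxOverP => i j; rewrite mxE rpredN h. Qed.

Lemma tr_real (X : 'M[C]_n) : X \is a realmx -> \tr X \is Num.real.
Proof. by move=> /mxOverP h; apply: rpred_sum => i _; apply: h. Qed.

Lemma expand_dot (u a v : 'cV[C]_n) (e t : C) :
  dot (u - e *: (u + t *: v)) (a + (u - e *: (u + t *: v))) =
  (1 - e) * (dot u a + dot u u) - e * dot u u - e * t * (dot v a + 2%:R * dot u v)
  + e ^+ 2 * (dot u u + 2%:R * t * dot u v + t * t * dot v v).
Proof.
rewrite !(dotDl, dotDr, dotNl, dotNr, dotZl, dotZr) (dotC v u).
ring.
Qed.

Lemma diag_le0 i : Mmx i i <= 0.
Proof.
have := Mmx_nsd _ (delta_real i); rewrite dot_delta -colE mxE.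
done.
Qed.

Lemma Mmx_col0 i : Mmx i i = 0 -> col i Mmx = 0.
Proof.
move=> h; rewrite colE; apply: (kerM Mmx Mmx_real Mmx_sym Mmx_nsd _ (delta_real i)).
by rewrite dot_delta -colE mxE.
Qed.

Lemma trM_neq0 : Mmx != 0 -> \tr Mmx != 0.
Proof.
move=> Mn0; apply: contra Mn0 => /eqP h0.
have h : forall i, - Mmx i i = 0.
  move=> i; apply: (@psumr_eq0P _ _ predT (fun i => - Mmx i i)) => //.
    by move=> k _; rewrite oppr_ge0 diag_le0.
  by rewrite sumrN -/(mxtrace Mmx) h0 oppr0.
apply/eqP/matrixP => i j.
have hj : Mmx j j = 0 by apply/eqP; rewrite -oppr_eq0 h.
have := congr1 (fun X : 'cV[C]_n => X i 0) (Mmx_col0 j hj).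
by rewrite !mxE.
Qed.

Lemma Mmx_zero : (forall Q, feasible A Q -> \tr Q <= \tr P) -> Mmx = 0.
Proof.
move=> hopt; case: (eqVneq Mmx 0) => // Mn0; exfalso.
have trMn := trM_neq0 Mn0.
have trMr := tr_real _ Mmx_real.
have trPr := tr_real _ Pr.
pose t := - (\tr P + 1) / \tr Mmx.
have tr : t \is Num.real by rewrite /t rpredM ?rpredN ?rpredV ?rpredD ?rpred1.
have [H [Hr eMB]] := Hex.
have [cH [cHr cH0 hcH]] := mx_bound H^T (realmx_tr _ _ _ Hr).
have [cM [cMr cM0 hcM]] := L2 Mmx Mmx_real Mmx_sym Mmx_nsd.
pose c4 := 2%:R * cM.
pose Z := 1 + t * t * c4 * (cH + 1).
have tt0 : 0 <= t * t by rewrite -expr2 -realEsqr.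
have c40 : 0 <= c4 by rewrite mulr_ge0 ?ler0n.
have Z1 : 1 <= Z.
  by rewrite /Z lerDl mulr_ge0 ?addr_ge0 ?ler01 // mulr_ge0.
have Z0 : 0 < Z by apply: lt_le_trans Z1; exact: ltr01.
have c4r : c4 \is Num.real by rewrite /c4 rpredM ?realn.
have Zr : Z \is Num.real.
  exact: rpredD (rpred1 _) (rpredM (rpredM (rpredM tr tr) c4r) (rpredD cHr (rpred1 _))).
pose e := (4%:R * Z)^-1.
have e0 : 0 < e by rewrite /e invr_gt0 mulr_gt0 ?ltr0n.
have er : e \is Num.real by rewrite /e rpredV rpredM ?realn.
have Zn : Z != 0 by rewrite gt_eqF.
have he4 : 4%:R * e <= 1.
  have -> : 4%:R * e = Z^-1 by rewrite /e; field.
  by rewrite invf_le1.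
have heZ : e * Z <= 1.
  have -> : e * Z = (4%:R)^-1 by rewrite /e; field.
  by rewrite invf_le1 ?ltr0n // ler1n.
pose D := - (P + t *: Mmx).
pose Q := P + e *: D.
have Dr : D \is a realmx by rewrite /D realmxN // realmxD // mxOverZ // Mmx_real.
have Qr : Q \is a realmx by rewrite /Q realmxD // mxOverZ.
have Qs : Q^T = Q.
  rewrite /Q /D linearD /= linearZ /= linearN /= linearD /= linearZ /= Mmx_sym.
  by rewrite -[P^T]/(trmx P) Ps.
have trQ : \tr Q = \tr P + e.
  rewrite /Q /D mxtraceD mxtraceZ linearN /= mxtraceD mxtraceZ.
  congr (_ + _); rewrite /t; field.
  by [].
suff feas : feasible A Q.
  by have := hopt Q feas; rewrite trQ gerDl => /(lt_le_trans e0); rewrite ltxx.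
split => //; split => //.
move=> x xr.
set u := P *m x; set v := Mmx *m x; set a := A *m x; set g := H^T *m v.
have ur : u \is a realmx by apply: mxOverM.
have vr : v \is a realmx by apply: mxOverM; rewrite ?Mmx_real.
have ar : a \is a realmx by apply: mxOverM.
have gr : g \is a realmx by apply: mxOverM; rewrite ?realmx_tr.
have Qx : Q *m x = u - e *: (u + t *: v).
  by rewrite /Q /D mulmxDl -scalemxAl mulNmx mulmxDl -scalemxAl -/u -/v scalerN.
have -> : (x^T *m (Q *m (A + Q)) *m x) 0 0 = dot (Q *m x) (a + Q *m x).
  by rewrite -mulmxA -/(dot x _) -mulmxA dotMr Qs (mulmxDl A Q x).
rewrite Qx expand_dot.
have dM : forall y w : 'cV[C]_n, dot (Mmx *m y) w = dot y (Mmx *m w).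
  by move=> y w; rewrite dotMr Mmx_sym.
have E1 : dot v a + 2%:R * dot u v = dot g u.
  rewrite (dotC u v) -dotZr -dotDr.
  have -> : a + 2%:R *: u = Bmx *m x by rewrite /Bmx (mulmxDl A (2%:R *: P) x) -scalemxAl.
  rewrite /v dM mulmxA eMB -!mulmxA dotMr Mmx_sym dotMr.
  by [].
have hfe : dot x ((P *m (A + P)) *m x) = dot u a + dot u u.
  by rewrite -mulmxA dotMr -[P^T]/(trmx P) Ps (mulmxDl A P x) dotDr.
have hf : dot u a + dot u u <= 0.
  by rewrite -hfe /dot (mulmxA x^T (P *m (A + P)) x); apply: hnsd.
rewrite E1.
apply: (@scalar_key C (dot u a + dot u u) (dot u u) (dot u v) (dot g u) (dot g g) (dot v v) t e cH c4) => //.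
- by rewrite dot_ge0.
- have h := dot_ge0 (t *: g + u) (realmxD (mxOverZ tr gr) ur).
  rewrite !(dotDl, dotDr, dotZl, dotZr) (dotC u g) in h.
  have -> : t * t * dot g g + 2%:R * t * dot g u + dot u u =
    t * (t * dot g g) + t * dot g u + (t * dot g u + dot u u) by ring.
  exact: h.
- have h := dot_ge0 (u - t *: v) (realmxD ur (realmxN _ _ _ (mxOverZ tr vr))).
  rewrite !(dotDl, dotDr, dotZl, dotZr, dotNl, dotNr) (dotC v u) in h.
  rewrite -[X in _ <= X]/(dot u u - 2%:R * t * dot u v + t * t * dot v v).
  move: h; set lhs := (X in 0 <= X -> _) => h.
  have -> : dot u u - 2%:R * t * dot u v + t * t * dot v v = lhs by rewrite /lhs; ring.
  exact: h.
- by apply: hcH.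
- have := hcM x xr; rewrite Mmx_q hfe.
  have -> : cM * - (2%:R * (dot u a + dot u u)) = c4 * - (dot u a + dot u u) by rewrite /c4; ring.
  by [].
- exact: ltW.
Qed.

End Main.


Theorem mainTheorem1 (C : numClosedFieldType) (n : nat) (A P : 'M[C]_n)
  (hAreal : A \is a realmx) (hAfull : A \in unitmx) (hAhur : hurwitz A)
  (hPreal : P \is a realmx) (hPsym : P^T = P) :
  (forall x : 'cV[C]_n, x \is a realmx -> A *m x = - gradU P x + fU A P x) /\
  (optimal A P ->
     P *m A + A^T *m P + 2%:R *: (P *m P) = 0 /\
     forall x : 'cV[C]_n, x \is a realmx -> ((gradU P x)^T *m fU A P x) 0 0 = 0).
Proof.
split.
  by move=> x xr; rewrite /gradU /fU mulmxDl addrCA addNr addr0.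
move=> [[_ [_ hn]] hopt].
have hM := Mmx_zero A P hAreal hPreal hPsym hn hopt.
split; first by rewrite -(Mmx_E A P hPsym) hM.
move=> x xr.
have h := Mmx_q A P x.
rewrite hM mul0mx {1}/dot mulmx0 mxE in h.
rewrite /gradU /fU -/(dot (P *m x) ((A + P) *m x)).
rewrite -[P in dot (P *m x) _]hPsym -dotMr mulmxA.
by move/eqP: h; rewrite eq_sym mulf_eq0 pnatr_eq0 /= => /eqP.
Qed.
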